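(* For all integers $N\ge2$ and real $0<\theta<2\pi$, $$\prod_{j=1}^N\big|e^{ij\theta/N}-1\big|^{-1}<\frac{2N}{\theta\sin(\theta/2)}\exp\Big(N\frac{\mathrm{Cl}_2(\theta)}{\theta}\Big).$$
   Context: $\mathrm{Cl}_2(\theta):=\sum_{k\ge1}k^{-2}\sin(k\theta)$ is the Clausen function. *)

(* Defs.v *)
From Stdlib Require Import Reals.
Open Scope R_scope.

(* Modulus of the complex number e^{i x} - 1 = (cos x - 1) + i sin x. *)
Definition abs_expi_minus1 (x : R) : R :=
  sqrt ((cos x - 1) ^ 2 + (sin x) ^ 2).

(* k-th term (k >= 1, indexed from 0 as n = k - 1) of the Clausen series
   Cl_2(theta) = sum_{k>=1} sin(k theta)/k^2. *)
Definition clausen_term (theta : R) (n : nat) : R :=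
  sin (INR (S n) * theta) / (INR (S n)) ^ 2.

Fixpoint prod_1_to (N : nat) (f : nat -> R) : R :=
  match N with
  | O => 1
  | S m => prod_1_to m f * f (S m)
  end.

(* Main.v *)
Require Import Defs.
From Stdlib Require Import Reals Lra Lia Psatz.
From Coquelicot Require Import Coquelicot.
Open Scope R_scope.

Lemma sum_bound_const (d : nat -> R) (c : R) (m : nat) :
  (forall k, (k <= m)%nat -> Rabs (d k) <= c) ->
  Rabs (sum_f_R0 d m) <= INR (S m) * c.
Proof.
  induction m as [|m IH]; intros H.
  - simpl. specialize (H 0%nat (le_n _)). lra.
  - simpl sum_f_R0. rewrite S_INR.
    eapply Rle_trans; [apply Rabs_triang|].
    assert (H1 := H (S m) (le_n _)).
    assert (H2 : Rabs (sum_f_R0 d m) <= INR (S m) * c) by (apply IH; intros; apply H; lia).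
    rewrite Rmult_plus_distr_r, Rmult_1_l. lra.
Qed.

Lemma partial_diff_bound (a b : nat -> R) (n p : nat) :
  (forall k, Rabs (a k) <= b k) ->
  Rabs (sum_f_R0 a (n + p) - sum_f_R0 a n) <= sum_f_R0 b (n + p) - sum_f_R0 b n.
Proof.
  intros H. induction p as [|p IH].
  - rewrite Nat.add_0_r. rewrite !Rminus_diag, Rabs_R0. lra.
  - rewrite Nat.add_succ_r. simpl sum_f_R0.
    replace (sum_f_R0 a (n + p) + a (S (n + p)) - sum_f_R0 a n)
      with ((sum_f_R0 a (n + p) - sum_f_R0 a n) + a (S (n + p))) by ring.
    eapply Rle_trans; [apply Rabs_triang|]. specialize (H (S (n+p))). lra.
Qed.

Lemma tail_bound (a b : nat -> R) (l L : R) :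
  (forall k, Rabs (a k) <= b k) -> infinite_sum a l -> infinite_sum b L ->
  forall n, Rabs (l - sum_f_R0 a n) <= L - sum_f_R0 b n.
Proof.
  intros H Ha Hb n.
  apply Rnot_lt_le; intro Hc.
  set (e := (Rabs (l - sum_f_R0 a n) - (L - sum_f_R0 b n)) / 3).
  assert (He : 0 < e) by (unfold e; lra).
  destruct (Ha e He) as [N1 HN1]. destruct (Hb e He) as [N2 HN2].
  set (m := (n + (N1 + N2))%nat).
  assert (A1 := HN1 m ltac:(unfold m; lia)).
  assert (A2 := HN2 m ltac:(unfold m; lia)).
  unfold R_dist in A1, A2.
  assert (A3 := partial_diff_bound a b n (N1 + N2) H). fold m in A3.
  assert (Rabs (l - sum_f_R0 a n) <= Rabs (sum_f_R0 a m - l) + Rabs (sum_f_R0 a m - sum_f_R0 a n)).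
  { replace (l - sum_f_R0 a n) with (-(sum_f_R0 a m - l) + (sum_f_R0 a m - sum_f_R0 a n)) by ring.
    eapply Rle_trans; [apply Rabs_triang|]. rewrite Rabs_Ropp. lra. }
  assert (sum_f_R0 b m - L <= Rabs (sum_f_R0 b m - L)) by apply Rle_abs.
  unfold e in *. lra.
Qed.
Lemma invsq_sum : exists L, infinite_sum (fun n => / INR (S n) ^ 2) L.
Proof.
  assert (Hb : forall n, sum_f_R0 (fun n => / INR (S n) ^ 2) n <= 2 - / INR (S n)).
  { induction n as [|n IH].
    - simpl. lra.
    - rewrite tech5.
      assert (h1 : 0 < INR (S n)) by apply lt_0_INR, Nat.lt_0_succ.
      assert (e : INR (S (S n)) = INR (S n) + 1) by apply S_INR.
      rewrite e in *.
      assert (/ (INR (S n) + 1) ^ 2 <= / INR (S n) - / (INR (S n) + 1)).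
      { apply (Rmult_le_reg_r (INR (S n) * (INR (S n) + 1)^2)). 
        - apply Rmult_lt_0_compat; [lra| apply pow_lt; lra].
        - field_simplify; try lra. }
      lra. }
  destruct (growing_cv (fun n => sum_f_R0 (fun n => / INR (S n) ^ 2) n)) as [L HL].
  - intro n. rewrite tech5. assert (0 < / INR (S (S n)) ^ 2).
    { apply Rinv_0_lt_compat, pow_lt, lt_0_INR. lia. } lra.
  - exists 2. intros x [n ->]. specialize (Hb n).
    assert (0 < / INR (S n)) by (apply Rinv_0_lt_compat, lt_0_INR; lia). lra.
  - exists L. exact HL.
Qed.

Lemma geom_sum (r : R) : 0 <= r < 1 -> infinite_sum (fun n => r ^ n) (/ (1 - r)).
Proof.
  intros Hr. apply is_series_Reals. apply is_series_geom. rewrite Rabs_pos_eq; lra.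
Qed.
Lemma cos_rec (a x : R) : cos (a + x) = 2 * cos x * cos a - cos (a - x).
Proof. rewrite cos_plus, cos_minus. ring. Qed.

Lemma cos_series (x r : R) : Rabs r < 1 ->
  Series (fun n => cos (INR (S n) * x) * r ^ n) * (1 - 2*r*cos x + r^2) = cos x - r.
Proof.
  intros Hr.
  set (u := fun n => cos (INR (S n) * x) * r ^ n).
  assert (Hu : ex_series u).
  { apply (@ex_series_le R_AbsRing R_CompleteNormedModule _ (fun n => Rabs r ^ n)).
    - intro n. unfold u. change norm with Rabs.
      rewrite Rabs_mult, <- RPow_abs.
      assert (Rabs (cos (INR (S n) * x)) <= 1) by (apply Rabs_le; apply COS_bound).
      assert (0 <= Rabs r ^ n) by (apply pow_le, Rabs_pos).
      nra.
    - apply ex_series_geom. rewrite Rabs_Rabsolu. exact Hr. }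
  assert (Hu1 : ex_series (fun k => u (S k))) by (apply (proj1 (ex_series_incr_1 u)); exact Hu).
  assert (Hu2 : ex_series (fun k => u (S (S k)))) by (apply (proj1 (ex_series_incr_1 (fun k => u (S k)))); exact Hu1).
  assert (E1 := Series_incr_1 u Hu).
  assert (E2 := Series_incr_1 _ Hu1).
  assert (E3 : Series (fun k => u (S (S k))) =
              2 * cos x * r * Series (fun k => u (S k)) - r^2 * Series u).
  { rewrite <- !Series_scal_l. rewrite <- Series_minus.
    2: exact (@ex_series_scal_l R_AbsRing R_NormedModule _ _ Hu1).
    2: exact (@ex_series_scal_l R_AbsRing R_NormedModule _ _ Hu).
    apply Series_ext. intro n. unfold u.
    assert (cos (INR (S (S (S n))) * x) =
       2 * cos x * cos (INR (S (S n)) * x) - cos (INR (S n) * x)).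
    { replace (INR (S (S (S n))) * x) with (INR (S (S n)) * x + x) by (rewrite !S_INR; ring).
      replace (INR (S n) * x) with (INR (S (S n)) * x - x) by (rewrite !S_INR; ring).
      apply cos_rec. }
    rewrite H. simpl pow. ring. }
  set (T := Series u) in *.
  assert (U0 : u 0%nat = cos x) by (unfold u; simpl; rewrite Rmult_1_l; ring).
  assert (U1 : u 1%nat = (2 * cos x ^ 2 - 1) * r).
  { unfold u. replace (INR 2 * x) with (2 * x) by (simpl; ring).
    rewrite cos_2a_cos. simpl. ring. }
  cbv beta in E2. rewrite U0 in E1. rewrite U1 in E2. rewrite E3 in E2. nra.
Qed.

Definition fr (r x : R) : R := -/2 * ln (1 - 2*r*cos x + r^2).
Definition dterm (r x : R) (n : nat) : R := r^(S n) * cos (INR (S n) * x) / INR (S n).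
Definition acoef (x : R) (k : nat) : R :=
  match k with O => 0 | S n => cos (INR (S n) * x) / INR (S n) end.

Lemma D_pos (y x : R) : Rabs y < 1 -> 0 < 1 - 2*y*cos x + y^2.
Proof.
  intros Hy. destruct (COS_bound x) as [c1 c2].
  destruct (Rle_or_lt 0 y) as [H|H].
  - rewrite Rabs_pos_eq in Hy by lra. nra.
  - rewrite Rabs_left in Hy by lra. nra.
Qed.

Lemma dterm_sum (r x : R) : 0 <= r < 1 -> infinite_sum (dterm r x) (fr r x).
Proof.
  intros Hr.
  set (a := acoef x).
  assert (H1 : Rbar_le 1 (CV_radius a)).
  { destruct (CV_radius_bounded a) as [Hub _]. apply Hub.
    exists 1. intro n. unfold a, acoef. destruct n as [|n].
    - rewrite Rmult_0_l, Rabs_R0. lra.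
    - rewrite pow1, Rmult_1_r. unfold Rdiv. rewrite Rabs_mult.
      assert (Rabs (cos (INR (S n) * x)) <= 1) by (apply Rabs_le; apply COS_bound).
      assert (h : 1 <= INR (S n)) by (apply (le_INR 1); lia).
      rewrite Rabs_inv, (Rabs_pos_eq (INR (S n))) by lra.
      assert (0 < / INR (S n) <= 1).
      { split. apply Rinv_0_lt_compat; lra. rewrite <- Rinv_1. apply Rinv_le_contravar; lra. }
      assert (0 <= Rabs (cos (INR (S n) * x))) by apply Rabs_pos. nra. }
  assert (Hrad : forall y, Rabs y < 1 -> Rbar_lt (Rabs y) (CV_radius a)).
  { intros y Hy. apply (Rbar_lt_le_trans _ 1); [exact Hy | exact H1]. }
  set (phi := fun y => PSeries a y - fr y x).
  assert (Hder : forall y, Rabs y < 1 -> is_derive phi y 0).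
  { intros y Hy.
    assert (HD := D_pos y x Hy).
    assert (E : PSeries (PS_derive a) y = (cos x - y) / (1 - 2*y*cos x + y^2)).
    { assert (E' : PSeries (PS_derive a) y = Series (fun n => cos (INR (S n) * x) * y ^ n)).
      { unfold PSeries. apply Series_ext. intro n. unfold PS_derive, a, acoef. field.
        apply not_0_INR. lia. }
      rewrite E'. rewrite <- (cos_series x y Hy). field. lra. }
    assert (Hp := is_derive_PSeries a y (Hrad y Hy)). rewrite E in Hp.
    assert (Hf : is_derive (fun y => fr y x) y ((cos x - y) / (1 - 2*y*cos x + y^2))).
    { unfold fr. auto_derive. lra. field. lra. }
    replace 0 with (minus ((cos x - y) / (1 - 2*y*cos x + y^2)) ((cos x - y) / (1 - 2*y*cos x + y^2))).
    2: { unfold minus, plus, opp. simpl. ring. }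
    apply (is_derive_minus _ _ _ _ _ Hp Hf). }
  assert (Hr1 : Rabs r < 1) by (rewrite Rabs_pos_eq; lra).
  assert (Hphi : phi r = phi 0).
  { destruct (MVT_gen phi 0 r (fun _ => 0)) as [c [Hc Hc2]].
    - intros y Hy. apply Hder. rewrite Rmin_left, Rmax_right in Hy by lra.
      apply Rabs_def1; lra.
    - intros y Hy. rewrite Rmin_left, Rmax_right in Hy by lra.
      apply derivable_continuous_pt.
      exists 0. apply is_derive_Reals, Hder. apply Rabs_def1; lra.
    - lra. }
  assert (Hphi0 : phi 0 = 0).
  { unfold phi. rewrite PSeries_0. unfold a, acoef, fr.
    replace (1 - 2 * 0 * cos x + 0 ^ 2) with 1 by ring. rewrite ln_1. ring. }
  assert (HP : PSeries a r = fr r x) by (unfold phi in Hphi, Hphi0; lra).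
  assert (Hs : is_series (fun n => a n * r ^ n) (PSeries a r)).
  { apply is_pseries_R. apply PSeries_correct. apply CV_radius_inside. apply Hrad. exact Hr1. }
  apply is_series_Reals. rewrite <- HP.
  assert (Hext : forall n, a (S n) * r ^ (S n) = dterm r x n).
  { intro n. unfold a, acoef, dterm. unfold Rdiv. ring. }
  apply (@is_series_ext R_AbsRing R_NormedModule _ _ _ Hext).
  apply (@is_series_incr_1 R_AbsRing R_NormedModule (fun k => a k * r ^ k)).
  match goal with |- is_series _ ?l => replace l with (PSeries a r) end.
  2: { unfold a, acoef. unfold plus. simpl. ring. }
  exact Hs.
Qed.

Lemma series_deriv (u u' : nat -> R -> R) (B : nat -> R) (LB : R) (G : R -> R) :
  (forall n y, derivable_pt_lim (u n) y (u' n y)) ->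
  (forall n y, Rabs (u' n y) <= B n) -> infinite_sum B LB ->
  (forall y, ex_series (fun n => u n y)) ->
  (forall y, infinite_sum (fun n => u' n y) (G y)) ->
  forall x, derivable_pt_lim (fun y => Series (fun n => u n y)) x (G x).
Proof.
  intros Hd Hb HB Hex HG x.
  apply (CVU_derivable (fun n y => sum_f_R0 (fun k => u k y) n)
    (fun n y => sum_f_R0 (fun k => u' k y) n) (fun y => Series (fun n => u n y)) G x
    (mkposreal 1 Rlt_0_1)).
  - intros eps He. destruct (HB eps He) as [N HN]. exists N. intros n y Hn _.
    eapply Rle_lt_trans.
    + apply (tail_bound (fun k => u' k y) B (G y) LB (fun k => Hb k y) (HG y) HB n).
    + specialize (HN n Hn). unfold R_dist in HN.
      assert (LB - sum_f_R0 B n <= Rabs (sum_f_R0 B n - LB)).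
      { rewrite <- Rabs_Ropp. eapply Rle_trans; [|apply Rle_abs]. lra. }
      lra.
  - intros y _. assert (H := Series_correct _ (Hex y)). apply is_series_Reals in H. exact H.
  - intros n y _. induction n as [|n IH].
    + simpl. apply Hd.
    + simpl. apply derivable_pt_lim_plus; [exact IH | apply Hd].
  - unfold Boule. simpl. rewrite Rminus_diag, Rabs_R0. lra.
Qed.

Definition cterm (r y : R) (n : nat) : R := r^(S n) * sin (INR (S n) * y) / INR (S n) ^ 2.
Definition Cr (r y : R) : R := Series (cterm r y).

Lemma INR_S_pos n : 0 < INR (S n).
Proof. apply lt_0_INR. lia. Qed.

Lemma cterm_deriv r n y : derivable_pt_lim (fun y => cterm r y n) y (dterm r y n).
Proof.
  apply is_derive_Reals. unfold cterm, dterm.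
  assert (h := INR_S_pos n). set (k := INR (S n)) in *. clearbody k.
  auto_derive. auto. simpl. field. lra.
Qed.

Lemma dterm_bound r y n : 0 <= r <= 1 -> Rabs (dterm r y n) <= r ^ n.
Proof.
  intros Hr. unfold dterm. unfold Rdiv. rewrite !Rabs_mult.
  assert (h := INR_S_pos n).
  assert (h1 : 1 <= INR (S n)) by (apply (le_INR 1); lia).
  rewrite Rabs_inv, (Rabs_pos_eq (INR (S n))) by lra.
  rewrite Rabs_pos_eq by (apply pow_le; lra).
  assert (Rabs (cos (INR (S n) * y)) <= 1) by (apply Rabs_le; apply COS_bound).
  assert (0 < / INR (S n) <= 1).
  { split. apply Rinv_0_lt_compat; lra. rewrite <- Rinv_1. apply Rinv_le_contravar; lra. }
  assert (0 <= Rabs (cos (INR (S n) * y))) by apply Rabs_pos.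
  assert (0 <= r ^ n) by (apply pow_le; lra).
  assert (r ^ S n <= r ^ n) by (simpl; nra).
  assert (0 <= r ^ S n) by (apply pow_le; lra).
  assert (Rabs (cos (INR (S n) * y)) * / INR (S n) <= 1) by nra.
  nra.
Qed.

Lemma pow_le_one r n : 0 <= r <= 1 -> r ^ n <= 1.
Proof.
  intros Hr. induction n as [|n IH]; simpl. lra.
  assert (0 <= r ^ n) by (apply pow_le; lra). nra.
Qed.

Lemma cterm_bound r y n : 0 <= r <= 1 -> Rabs (cterm r y n) <= / INR (S n) ^ 2.
Proof.
  intros Hr. unfold cterm. unfold Rdiv. rewrite !Rabs_mult.
  assert (h := INR_S_pos n).
  rewrite Rabs_inv, (Rabs_pos_eq (INR (S n) ^ 2)) by (apply pow_le; lra).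
  rewrite Rabs_pos_eq by (apply pow_le; lra).
  assert (Rabs (sin (INR (S n) * y)) <= 1) by (apply Rabs_le; apply SIN_bound).
  assert (0 <= Rabs (sin (INR (S n) * y))) by apply Rabs_pos.
  assert (r ^ S n <= 1) by (apply pow_le_one; lra).
  assert (0 <= r ^ S n) by (apply pow_le; lra).
  assert (0 < / INR (S n) ^ 2) by (apply Rinv_0_lt_compat, pow_lt; lra).
  assert (r ^ S n * Rabs (sin (INR (S n) * y)) <= 1) by nra.
  nra.
Qed.

Lemma Cr_ex r y : 0 <= r <= 1 -> ex_series (cterm r y).
Proof.
  intros Hr. destruct invsq_sum as [L HL].
  apply (@ex_series_le R_AbsRing R_CompleteNormedModule _ (fun n => / INR (S n) ^ 2)).
  - intro n. apply cterm_bound. exact Hr.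
  - exists L. apply is_series_Reals. exact HL.
Qed.

Lemma Cr_deriv r : 0 <= r < 1 -> forall x, derivable_pt_lim (Cr r) x (fr r x).
Proof.
  intros Hr x.
  apply (series_deriv (fun n y => cterm r y n) (fun n y => dterm r y n)
           (fun n => r ^ n) (/ (1 - r)) (fr r)).
  - intros n y. apply cterm_deriv.
  - intros n y. apply dterm_bound. lra.
  - apply geom_sum. exact Hr.
  - intros y. apply Cr_ex. lra.
  - intros y. apply dterm_sum. exact Hr.
Qed.

Lemma ln_le_sub1 x : 0 < x -> ln x <= x - 1.
Proof. intros Hx. assert (H := exp_ineq1_le (ln x)). rewrite exp_ln in H by lra. lra. Qed.

Lemma ln_diff_le p q mm : 0 < mm -> mm <= p -> mm <= q -> Rabs (ln p - ln q) <= Rabs (p - q) / mm.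
Proof.
  intros Hm Hp Hq.
  assert (key : forall p q, mm <= p -> p <= q -> ln q - ln p <= (q - p) / mm).
  { intros p' q' H1 H2.
    assert (e : ln q' - ln p' = ln (q' * / p')).
    { rewrite ln_mult, ln_Rinv; try apply Rinv_0_lt_compat; try lra. }
    rewrite e. eapply Rle_trans. apply ln_le_sub1.
    { apply Rmult_lt_0_compat; [lra| apply Rinv_0_lt_compat; lra]. }
    replace (q' * / p' - 1) with ((q' - p') / p') by (field; lra).
    unfold Rdiv. apply Rmult_le_compat_l. lra. apply Rinv_le_contravar; lra. }
  destruct (Rle_or_lt p q) as [H|H].
  - rewrite Rabs_left1.
    2: { assert (ln p <= ln q) by (apply ln_le; lra). lra. }
    rewrite Rabs_left1 by lra.
    replace (- (ln p - ln q)) with (ln q - ln p) by ring.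
    replace (- (p - q)) with (q - p) by ring. apply key; lra.
  - rewrite Rabs_pos_eq.
    2: { assert (ln q <= ln p) by (apply ln_le; lra). lra. }
    rewrite Rabs_pos_eq by lra. apply key; lra.
Qed.

Lemma fr_close r y m0 : 0 < m0 -> m0 <= 2 - 2*cos y -> 1/2 <= r <= 1 ->
  Rabs (fr 1 y - fr r y) <= 5 * (1 - r) / m0.
Proof.
  intros Hm H Hr. unfold fr.
  set (D1 := 2 - 2 * cos y) in *.
  replace (1 - 2 * 1 * cos y + 1 ^ 2) with D1 by (unfold D1; ring).
  replace (1 - 2 * r * cos y + r ^ 2) with ((1 - r)^2 + r * D1) by (unfold D1; ring).
  assert (hD1 : D1 <= 4) by (unfold D1; destruct (COS_bound y); lra).
  replace (-/2 * ln D1 - -/2 * ln ((1 - r)^2 + r * D1))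
    with (-/2 * (ln D1 - ln ((1 - r)^2 + r * D1))) by ring.
  rewrite Rabs_mult. rewrite (Rabs_left (-/2)) by lra.
  assert (a1 : 0 < m0 / 2) by lra.
  assert (a2 : m0 / 2 <= D1) by lra.
  assert (0 <= (1-r)^2) by apply pow2_ge_0.
  assert (D1 / 2 <= r * D1) by (destruct Hr; nra).
  assert (a3 : m0 / 2 <= (1 - r)^2 + r * D1) by lra.
  assert (h := ln_diff_le D1 ((1 - r)^2 + r * D1) (m0 / 2) a1 a2 a3).
  replace (D1 - ((1 - r) ^ 2 + r * D1)) with ((1 - r) * (D1 - (1 - r))) in h by ring.
  rewrite Rabs_mult, (Rabs_pos_eq (1 - r)) in h by lra.
  assert (Rabs (D1 - (1 - r)) <= 4) by (apply Rabs_le; lra).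
  assert ((1 - r) * Rabs (D1 - (1 - r)) <= (1 - r) * 4) by (apply Rmult_le_compat_l; lra).
  assert (h2 : (1 - r) * Rabs (D1 - (1 - r)) / (m0 / 2) <= 8 * (1 - r) / m0).
  { unfold Rdiv. replace (/ (m0 * / 2)) with (2 * / m0) by (field; lra).
    assert (0 < / m0) by (apply Rinv_0_lt_compat; lra).
    replace (8 * (1 - r) * / m0) with ((1 - r) * 4 * (2 * / m0)) by ring.
    apply Rmult_le_compat_r; lra. }
  assert (0 <= (1 - r) / m0) by (unfold Rdiv; apply Rmult_le_pos; [lra| left; apply Rinv_0_lt_compat; lra]).
  unfold Rdiv in *. lra.
Qed.

Lemma bernoulli r n : 0 <= r <= 1 -> 1 - r ^ n <= INR n * (1 - r).
Proof.
  intros Hr. induction n as [|n IH].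
  - simpl. lra.
  - rewrite S_INR. simpl.
    assert (r ^ n <= 1) by (apply pow_le_one; lra).
    assert (0 <= r ^ n) by (apply pow_le; lra).
    nra.
Qed.

Definition rseq (n : nat) : R := 1 - / INR (n + 2).

Lemma rseq_bounds n : 1/2 <= rseq n < 1.
Proof.
  unfold rseq. assert (h : 2 <= INR (n + 2)) by (rewrite plus_INR; simpl; assert (0 <= INR n) by apply pos_INR; lra).
  assert (0 < / INR (n + 2)) by (apply Rinv_0_lt_compat; lra).
  assert (/ INR (n + 2) <= / 2) by (apply Rinv_le_contravar; lra). lra.
Qed.

Lemma Cr_is r y : 0 <= r <= 1 -> infinite_sum (cterm r y) (Cr r y).
Proof. intros Hr. apply is_series_Reals. apply Series_correct. apply Cr_ex. exact Hr. Qed.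

Lemma cterm_diff r y k : 0 <= r <= 1 ->
  Rabs (cterm r y k - cterm 1 y k) <= INR (S k) * (1 - r).
Proof.
  intros Hr. unfold cterm.
  replace (r ^ S k * sin (INR (S k) * y) / INR (S k) ^ 2 - 1 ^ S k * sin (INR (S k) * y) / INR (S k) ^ 2)
    with ((r ^ S k - 1) * (sin (INR (S k) * y) / INR (S k) ^ 2)) by (rewrite pow1; field; apply not_0_INR; lia).
  rewrite Rabs_mult.
  assert (h := INR_S_pos k).
  assert (h1 : 1 <= INR (S k)) by (apply (le_INR 1); lia).
  assert (Hs : Rabs (sin (INR (S k) * y) / INR (S k) ^ 2) <= 1).
  { unfold Rdiv. rewrite Rabs_mult, Rabs_inv, (Rabs_pos_eq (INR (S k) ^ 2)) by (apply pow_le; lra).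
    assert (Rabs (sin (INR (S k) * y)) <= 1) by (apply Rabs_le; apply SIN_bound).
    assert (0 <= Rabs (sin (INR (S k) * y))) by apply Rabs_pos.
    assert (0 < / INR (S k) ^ 2 <= 1).
    { split. apply Rinv_0_lt_compat, pow_lt; lra. rewrite <- Rinv_1. apply Rinv_le_contravar. lra.
      nra. }
    nra. }
  assert (r ^ S k <= 1) by (apply pow_le_one; lra).
  rewrite Rabs_left1 by lra.
  assert (hb := bernoulli r (S k) Hr).
  assert (0 <= Rabs (sin (INR (S k) * y) / INR (S k) ^ 2)) by apply Rabs_pos.
  nra.
Qed.

Lemma abs3 a b c : Rabs (a + b - c) <= Rabs a + Rabs b + Rabs c.
Proof.
  unfold Rminus. eapply Rle_trans; [apply Rabs_triang|]. rewrite Rabs_Ropp.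
  assert (Rabs (a + b) <= Rabs a + Rabs b) by apply Rabs_triang. lra.
Qed.

Lemma Cr_conv y : Un_cv (fun n => Cr (rseq n) y) (Cr 1 y).
Proof.
  intros eps He.
  destruct invsq_sum as [L HL].
  destruct (HL (eps/3) ltac:(lra)) as [m Hm]. specialize (Hm m (le_n m)). unfold R_dist in Hm.
  assert (T : forall r, 0 <= r <= 1 -> Rabs (Cr r y - sum_f_R0 (cterm r y) m) < eps/3).
  { intros r Hr. eapply Rle_lt_trans.
    apply (tail_bound (cterm r y) _ (Cr r y) L (fun k => cterm_bound r y k Hr) (Cr_is r y Hr) HL m).
    assert (L - sum_f_R0 (fun n => / INR (S n) ^ 2) m <= Rabs (sum_f_R0 (fun n => / INR (S n) ^ 2) m - L)).
    { rewrite <- Rabs_Ropp. eapply Rle_trans; [|apply Rle_abs]. lra. }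
    lra. }
  set (K := INR (S m) * INR (S m)).
  assert (HK : 0 < K) by (unfold K; assert (h := INR_S_pos m); nra).
  destruct (archimed_cor1 (eps / 3 / K)) as [N [HN HN0]].
  { apply Rdiv_lt_0_compat; lra. }
  exists N. intros n Hn. unfold R_dist.
  assert (Hr := rseq_bounds n). set (r := rseq n) in *.
  assert (Hr1 : 1 - r <= / INR N).
  { unfold r, rseq. replace (1 - (1 - / INR (n + 2))) with (/ INR (n + 2)) by ring.
    apply Rinv_le_contravar. apply lt_0_INR; lia. apply le_INR; lia. }
  assert (Mid : Rabs (sum_f_R0 (cterm r y) m - sum_f_R0 (cterm 1 y) m) <= K * (1 - r)).
  { rewrite <- minus_sum. unfold K. rewrite Rmult_assoc. apply sum_bound_const.
    intros k Hk. eapply Rle_trans. apply cterm_diff. lra.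
    apply Rmult_le_compat_r. lra. apply le_INR. lia. }
  assert (K * (1 - r) < eps / 3).
  { apply Rle_lt_trans with (K * / INR N). apply Rmult_le_compat_l; lra.
    replace (eps / 3) with (K * (eps / 3 / K)) by (field; lra).
    apply Rmult_lt_compat_l; lra. }
  assert (T1 := T r ltac:(lra)). assert (T2 := T 1 ltac:(lra)).
  replace (Cr r y - Cr 1 y) with ((Cr r y - sum_f_R0 (cterm r y) m) +
     (sum_f_R0 (cterm r y) m - sum_f_R0 (cterm 1 y) m) - (Cr 1 y - sum_f_R0 (cterm 1 y) m)) by ring.
  eapply Rle_lt_trans. apply abs3. lra.
Qed.

Lemma cos_2PI_minus y : cos (2*PI - y) = cos y.
Proof. rewrite cos_minus, cos_2PI, sin_2PI. ring. Qed.

Lemma cos_le_ball d y : 0 < d <= PI -> d <= y <= 2*PI - d -> cos y <= cos d.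
Proof.
  intros Hd Hy.
  destruct (Rle_or_lt y PI) as [H|H].
  - destruct (Rle_lt_or_eq_dec d y (proj1 Hy)) as [H1|H1].
    + left. apply cos_decreasing_1; lra.
    + subst. lra.
  - rewrite <- cos_2PI_minus.
    destruct (Rle_lt_or_eq_dec d (2*PI - y) ltac:(lra)) as [H1|H1].
    + left. apply cos_decreasing_1; lra.
    + rewrite <- H1. lra.
Qed.

Lemma Cl2_deriv t0 : 0 < t0 < 2*PI -> derivable_pt_lim (Cr 1) t0 (fr 1 t0).
Proof.
  intros Ht.
  set (d := Rmin t0 (2*PI - t0) / 2).
  assert (Hd : 0 < d) by (unfold d;
     assert (0 < Rmin t0 (2*PI - t0)) by (apply Rmin_glb_lt; lra); lra).
  assert (Hd1 : 2 * d <= t0) by (unfold d; assert (h := Rmin_l t0 (2*PI - t0)); lra).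
  assert (Hd2 : 2 * d <= 2*PI - t0) by (unfold d; assert (h := Rmin_r t0 (2*PI - t0)); lra).
  assert (HPI := PI_RGT_0).
  assert (Hcd : cos d < 1).
  { rewrite <- cos_0. apply cos_decreasing_1; lra. }
  set (m0 := 2 - 2 * cos d).
  assert (Hm0 : 0 < m0) by (unfold m0; lra).
  set (dp := mkposreal d Hd).
  assert (Hball : forall y, Boule t0 dp y -> m0 <= 2 - 2 * cos y).
  { intros y Hy. unfold Boule in Hy. simpl in Hy. apply Rabs_def2 in Hy.
    assert (cos y <= cos d) by (apply cos_le_ball; lra). unfold m0; lra. }
  apply (CVU_derivable (fun n => Cr (rseq n)) (fun n => fr (rseq n)) (Cr 1) (fr 1) t0 dp).
  - intros eps He.
    destruct (archimed_cor1 (eps * m0 / 5)) as [N [HN HN0]].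
    { apply Rdiv_lt_0_compat. apply Rmult_lt_0_compat; lra. lra. }
    exists N. intros n y Hn Hy.
    assert (Hr := rseq_bounds n).
    eapply Rle_lt_trans. apply (fr_close (rseq n) y m0 Hm0 (Hball y Hy)). lra.
    assert (Hr1 : 1 - rseq n <= / INR N).
    { unfold rseq. replace (1 - (1 - / INR (n + 2))) with (/ INR (n + 2)) by ring.
      apply Rinv_le_contravar. apply lt_0_INR; lia. apply le_INR; lia. }
    apply (Rmult_lt_reg_r (m0 / 5)). lra.
    replace (5 * (1 - rseq n) / m0 * (m0 / 5)) with (1 - rseq n) by (field; lra).
    lra.
  - intros y _. apply Cr_conv.
  - intros n y _. apply Cr_deriv. assert (h := rseq_bounds n). lra.
  - unfold Boule. simpl. rewrite Rminus_diag, Rabs_R0. lra.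
Qed.

Lemma F_eq y : fr 1 y = -/2 * ln (2 - 2 * cos y).
Proof. unfold fr. f_equal. f_equal. ring. Qed.

Lemma cos_lt_1 y : 0 < y < 2*PI -> cos y < 1.
Proof.
  intros Hy. assert (HPI := PI_RGT_0).
  destruct (Rle_or_lt y PI) as [H|H].
  - rewrite <- cos_0. apply cos_decreasing_1; lra.
  - rewrite <- cos_2PI_minus. rewrite <- cos_0. apply cos_decreasing_1; lra.
Qed.

Lemma cos_cmp m t : 0 <= t -> t < m -> m + t < 2*PI -> cos m <= cos t.
Proof.
  intros H1 H2 H3. assert (HPI := PI_RGT_0).
  destruct (Rle_or_lt m PI) as [H|H].
  - left. apply cos_decreasing_1; lra.
  - rewrite <- cos_2PI_minus. left. apply cos_decreasing_1; lra.
Qed.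

Lemma convex_F m t : 0 <= t -> 0 < m - t -> m + t < 2*PI ->
  2 * fr 1 m <= fr 1 (m + t) + fr 1 (m - t).
Proof.
  intros H1 H2 H3. rewrite !F_eq.
  assert (Hp1 : 0 < 2 - 2 * cos (m + t)) by (assert (h := cos_lt_1 (m+t) ltac:(lra)); lra).
  assert (Hp2 : 0 < 2 - 2 * cos (m - t)) by (assert (h := cos_lt_1 (m-t) ltac:(lra)); lra).
  assert (Hp : 0 < 2 - 2 * cos m) by (assert (h := cos_lt_1 m ltac:(lra)); lra).
  assert (Hc := cos_cmp m t H1 ltac:(lra) H3).
  assert (Hct : cos t <= 1) by apply COS_bound.
  assert (Key : (2 - 2 * cos (m + t)) * (2 - 2 * cos (m - t)) <= (2 - 2 * cos m) * (2 - 2 * cos m)).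
  { rewrite cos_plus, cos_minus.
    assert (e1 : sin t * sin t = 1 - cos t * cos t) by (rewrite <- (sin2_cos2 t); unfold Rsqr; ring).
    assert (e2 : sin m * sin m = 1 - cos m * cos m) by (rewrite <- (sin2_cos2 m); unfold Rsqr; ring).
    assert (e3 : (2 - 2 * (cos m * cos t - sin m * sin t)) * (2 - 2 * (cos m * cos t + sin m * sin t))
               = 4 * (cos t - cos m) * (cos t - cos m)).
    { replace ((2 - 2 * (cos m * cos t - sin m * sin t)) * (2 - 2 * (cos m * cos t + sin m * sin t)))
        with (4 * (1 - cos m * cos t) * (1 - cos m * cos t) - 4 * (sin m * sin m) * (sin t * sin t)) by ring.
      rewrite e1, e2. ring. }
    rewrite e3. nra. }
  assert (L := ln_le _ _ (Rmult_lt_0_compat _ _ Hp1 Hp2) Key).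
  rewrite !ln_mult in L by lra. lra.
Qed.

Lemma Cl2_is_derive y : 0 < y < 2*PI -> is_derive (Cr 1) y (fr 1 y).
Proof. intros H. apply is_derive_Reals. apply Cl2_deriv. exact H. Qed.

Lemma cont_of_derive f y l : is_derive f y l -> continuity_pt f y.
Proof. intros H. apply derivable_continuous_pt. exists l. apply is_derive_Reals. exact H. Qed.

Lemma hh m a : 0 <= a -> 0 < m - a -> m + a < 2*PI ->
  2 * a * fr 1 m <= Cr 1 (m + a) - Cr 1 (m - a).
Proof.
  intros Ha H1 H2.
  set (c := fr 1 m).
  set (G := fun t => Cr 1 (m + t) - Cr 1 (m - t) - 2 * t * c).
  assert (Hder : forall t, 0 <= t <= a -> is_derive G t (fr 1 (m + t) + fr 1 (m - t) - 2 * c)).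
  { intros t Ht. unfold G.
    assert (D1 := Cl2_is_derive (m + t) ltac:(lra)).
    assert (D2 := Cl2_is_derive (m - t) ltac:(lra)).
    clearbody c. auto_derive.
    - split. eexists; exact D1. split. eexists; exact D2. auto.
    - replace (m + - t) with (m - t) by ring. assert (E1 : Derive (fun x : R => Cr 1 x) (m + t) = fr 1 (m+t)) by (apply is_derive_unique; exact D1). assert (E2 : Derive (fun x : R => Cr 1 x) (m - t) = fr 1 (m-t)) by (apply is_derive_unique; exact D2). rewrite E1, E2. ring. }
  destruct (MVT_gen G 0 a (fun t => fr 1 (m + t) + fr 1 (m - t) - 2 * c)) as [x [Hx Hx2]].
  - intros t Ht. rewrite Rmin_left, Rmax_right in Ht by lra. apply Hder. lra.
  - intros t Ht. rewrite Rmin_left, Rmax_right in Ht by lra. eapply cont_of_derive. apply Hder. lra.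
  - rewrite Rmin_left, Rmax_right in Hx by lra.
    assert (Hconv := convex_F m x ltac:(lra) ltac:(lra) ltac:(lra)).
    unfold G in Hx2. rewrite !Rplus_0_r, !Rminus_0_r in Hx2. fold c in Hconv.
    assert (0 <= (fr 1 (m + x) + fr 1 (m - x) - 2 * c) * (a - 0)) by (apply Rmult_le_pos; lra).
    lra.
Qed.

Fixpoint sum_1_to (M : nat) (g : nat -> R) : R :=
  match M with O => 0 | S k => sum_1_to k g + g (S k) end.

Lemma sum_1_to_S M g : sum_1_to (S M) g = sum_1_to M g + g (S M).
Proof. reflexivity. Qed.

Lemma tele h M : 0 < h -> INR M * h + h/2 < 2*PI ->
  h * sum_1_to M (fun j => fr 1 (INR j * h)) <= Cr 1 (INR M * h + h/2) - Cr 1 (h/2).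
Proof.
  intros Hh. induction M as [|M IH]; intros HM.
  - simpl. replace (0 * h + h/2) with (h/2) by ring. lra.
  - rewrite sum_1_to_S. rewrite S_INR in *.
    assert (HM' : INR M * h + h/2 < 2*PI) by lra.
    specialize (IH HM').
    assert (Hp : 0 <= INR M) by apply pos_INR.
    assert (HH := hh ((INR M + 1) * h) (h/2) ltac:(lra) ltac:(nra) ltac:(lra)).
    assert (E : (INR M + 1) * h - h / 2 = INR M * h + h/2) by field.
    rewrite E in HH. lra.
Qed.

Lemma ln4 : ln 4 = 2 * ln 2.
Proof. replace 4 with (2 * 2) by ring. rewrite ln_mult by lra. ring. Qed.

Lemma F_lower y : 0 < y < 2*PI -> - ln 2 <= fr 1 y.
Proof.
  intros Hy. rewrite F_eq.
  assert (h := cos_lt_1 y Hy). destruct (COS_bound y).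
  assert (ln (2 - 2 * cos y) <= ln 4) by (apply ln_le; lra).
  rewrite ln4 in H1. lra.
Qed.

Lemma last_piece t a : 0 <= a -> 0 < t - a -> t < 2*PI -> - a * ln 2 <= Cr 1 t - Cr 1 (t - a).
Proof.
  intros Ha H1 H2.
  destruct (MVT_gen (Cr 1) (t - a) t (fr 1)) as [c [Hc Hc2]].
  - intros x Hx. rewrite Rmin_left, Rmax_right in Hx by lra. apply Cl2_is_derive. lra.
  - intros x Hx. rewrite Rmin_left, Rmax_right in Hx by lra. eapply cont_of_derive.
    apply Cl2_is_derive. lra.
  - rewrite Rmin_left, Rmax_right in Hc by lra.
    assert (h := F_lower c ltac:(lra)).
    replace (t - (t - a)) with a in Hc2 by ring. rewrite Hc2. nra.
Qed.

Lemma abs_sin_le u : 0 <= u -> Rabs (sin u) <= u.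
Proof.
  intros Hu. destruct (Rle_lt_or_eq_dec 0 u Hu) as [H|H].
  - assert (sin u < u) by (apply sin_lt_x; exact H).
    destruct (Rle_or_lt u PI) as [H1|H1].
    + rewrite Rabs_pos_eq. lra. apply sin_ge_0; lra.
    + assert (HP := PI2_1). destruct (SIN_bound u). apply Rabs_le. lra.
  - subst. rewrite sin_0, Rabs_R0. lra.
Qed.

Lemma Rabs_def2b_le x a : Rabs x <= a -> -a <= x <= a.
Proof. intros H. split; [ | eapply Rle_trans; [apply Rle_abs|exact H]].
  rewrite <- Rabs_Ropp in H. assert (-x <= Rabs (-x)) by apply Rle_abs. lra. Qed.

Lemma Cl2_small eta : 0 < eta -> exists e0, 0 < e0 /\ forall e, 0 < e <= e0 -> - eta <= Cr 1 e.
Proof.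
  intros He.
  destruct invsq_sum as [L HL].
  destruct (HL (eta/2) ltac:(lra)) as [m Hm]. specialize (Hm m (le_n m)). unfold R_dist in Hm.
  assert (hm := INR_S_pos m).
  exists (eta / (2 * INR (S m))). split.
  { apply Rdiv_lt_0_compat; lra. }
  intros e [He1 He2].
  assert (T : Rabs (Cr 1 e - sum_f_R0 (cterm 1 e) m) < eta/2).
  { eapply Rle_lt_trans.
    apply (tail_bound (cterm 1 e) _ (Cr 1 e) L (fun k => cterm_bound 1 e k ltac:(lra)) (Cr_is 1 e ltac:(lra)) HL m).
    assert (L - sum_f_R0 (fun n => / INR (S n) ^ 2) m <= Rabs (sum_f_R0 (fun n => / INR (S n) ^ 2) m - L)).
    { rewrite <- Rabs_Ropp. eapply Rle_trans; [|apply Rle_abs]. lra. }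
    lra. }
  assert (Hsum : Rabs (sum_f_R0 (cterm 1 e) m) <= INR (S m) * e).
  { apply sum_bound_const. intros k _. unfold cterm. rewrite pow1, Rmult_1_l.
    assert (hk := INR_S_pos k).
    assert (h1 : 1 <= INR (S k)) by (apply (le_INR 1); lia).
    unfold Rdiv. rewrite Rabs_mult, Rabs_inv, (Rabs_pos_eq (INR (S k) ^ 2)) by (apply pow_le; lra).
    assert (hpos : 0 <= INR (S k) * e) by (apply Rmult_le_pos; lra).
    assert (Hs := abs_sin_le (INR (S k) * e) hpos).
    apply (Rmult_le_reg_r (INR (S k) ^ 2)). apply pow_lt; lra.
    rewrite Rmult_assoc, Rinv_l by (apply pow_nonzero; apply not_0_INR; lia). rewrite Rmult_1_r. assert (INR (S k) * e <= e * INR (S k) ^ 2) by nra. lra. }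
  assert (INR (S m) * e <= eta / 2).
  { apply (Rmult_le_reg_r (/ INR (S m))). apply Rinv_0_lt_compat; lra.
    replace (INR (S m) * e * / INR (S m)) with e by (field; lra).
    unfold Rdiv in *. replace (eta * / 2 * / INR (S m)) with (eta * / (2 * INR (S m))) by (field; lra).
    lra. }
  apply Rabs_def2 in T. destruct T as [T1 T2].
  apply Rabs_def2b_le in Hsum. lra.
Qed.

Lemma cos_ge_quad x : 0 <= x <= PI/2 -> 1 - x^2/2 <= cos x.
Proof.
  intros Hx. assert (HP := PI_RGT_0).
  destruct (cos_bound x 0 ltac:(lra) ltac:(lra)) as [H _].
  replace (cos_approx x (2 * 0 + 1)) with (1 - x^2/2) in H. exact H.
  unfold cos_approx, cos_term. simpl. field.
Qed.

Lemma first_piece a eta : 0 < a <= PI/2 -> 0 < eta -> a - a * ln a - eta <= Cr 1 a.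
Proof.
  intros Ha He. assert (HP := PI_RGT_0).
  destruct (Cl2_small (eta/3) ltac:(lra)) as [e0 [He0 Hsmall]].
  set (d := Rmin (1/2) (Rmin (eta/9) (Rmin e0 a))).
  assert (Hd1 : d <= 1/2) by apply Rmin_l.
  assert (Hd2 : d <= eta/9) by (unfold d; eapply Rle_trans; [apply Rmin_r| apply Rmin_l]).
  assert (Hd3 : d <= e0) by (unfold d; eapply Rle_trans; [apply Rmin_r|]; eapply Rle_trans; [apply Rmin_r|apply Rmin_l]).
  assert (Hd4 : d <= a) by (unfold d; eapply Rle_trans; [apply Rmin_r|]; eapply Rle_trans; [apply Rmin_r|apply Rmin_r]).
  assert (Hd0 : 0 < d) by (unfold d; repeat apply Rmin_glb_lt; lra).
  set (e := d * d).
  assert (He1 : 0 < e) by (unfold e; nra).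
  assert (He2 : e <= d) by (unfold e; nra).
  set (G := fun x => Cr 1 x - x + x * ln x).
  assert (Hder : forall x, 0 < x <= a -> is_derive G x (fr 1 x + ln x)).
  { intros x Hx. unfold G.
    assert (D1 := Cl2_is_derive x ltac:(lra)).
    auto_derive.
    - split. eexists; exact D1. split; auto. lra.
    - assert (E1 : Derive (fun x : R => Cr 1 x) x = fr 1 x) by (apply is_derive_unique; exact D1).
      rewrite E1. field. lra. }
  assert (Hpos : forall x, 0 < x <= a -> 0 <= fr 1 x + ln x).
  { intros x Hx. rewrite F_eq.
    assert (h1 := cos_lt_1 x ltac:(lra)).
    assert (h2 := cos_ge_quad x ltac:(lra)).
    assert (ln (2 - 2 * cos x) <= ln (x * x)) by (apply ln_le; [lra| nra]).
    rewrite ln_mult in H by lra. lra. }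
  destruct (MVT_gen G e a (fun x => fr 1 x + ln x)) as [c [Hc Hc2]].
  - intros x Hx. rewrite Rmin_left, Rmax_right in Hx by lra. apply Hder. lra.
  - intros x Hx. rewrite Rmin_left, Rmax_right in Hx by lra. eapply cont_of_derive. apply Hder. lra.
  - rewrite Rmin_left, Rmax_right in Hc by lra.
    assert (h := Hpos c ltac:(lra)).
    assert (0 <= (fr 1 c + ln c) * (a - e)) by (apply Rmult_le_pos; lra).
    assert (Hs := Hsmall e ltac:(lra)).
    assert (Hl : 1 - / d <= ln d).
    { assert (h' := ln_le_sub1 (/ d) ltac:(apply Rinv_0_lt_compat; lra)).
      rewrite ln_Rinv in h' by lra. lra. }
    assert (Hle : e * ln e >= 2 * e - 2 * d).
    { unfold e. rewrite ln_mult by lra.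
      assert (d * d * (1 - / d) <= d * d * ln d) by (apply Rmult_le_compat_l; nra).
      replace (d * d * (1 - / d)) with (d * d - d) in H0 by (field; lra). nra. }
    unfold G in Hc2. lra.
Qed.

Lemma PI_lt : PI < 16/5.
Proof.
  apply Rnot_le_lt. intro H.
  assert (H1 := cos_ge_0 (8/5) ltac:(lra) ltac:(lra)).
  destruct (pre_cos_bound (8/5) 1 ltac:(lra) ltac:(lra)) as [_ H2].
  unfold cos_approx in H2. cbn [sum_f_R0 Nat.mul Nat.add] in H2. unfold cos_term in H2.
  assert (f0 : INR (Factorial.fact (2*0)) = 1) by reflexivity.
  assert (f1 : INR (Factorial.fact (2*1)) = 2) by (rewrite INR_IZR_INZ; reflexivity).
  assert (f2 : INR (Factorial.fact (2*2)) = 24) by (rewrite INR_IZR_INZ; reflexivity).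
  assert (f3 : INR (Factorial.fact (2*3)) = 720) by (rewrite INR_IZR_INZ; reflexivity).
  assert (f4 : INR (Factorial.fact (2*4)) = 40320) by (rewrite INR_IZR_INZ; reflexivity).
  rewrite f0, f1, f2, f3, f4 in H2.
  cbn [Nat.mul Nat.add pow] in H2. lra.
Qed.

Lemma prod_exp M f g : (forall j, (1 <= j <= M)%nat -> f j = exp (g j)) ->
  prod_1_to M f = exp (sum_1_to M g).
Proof.
  induction M as [|M IH]; intros H.
  - simpl. rewrite exp_0. reflexivity.
  - simpl. rewrite IH by (intros; apply H; lia). rewrite H by lia. rewrite exp_plus. reflexivity.
Qed.

Lemma inv_abs_exp y : 0 < y < 2*PI -> / abs_expi_minus1 y = exp (fr 1 y).
Proof.
  intros Hy. unfold abs_expi_minus1. rewrite F_eq.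
  assert (h := cos_lt_1 y Hy).
  replace ((cos y - 1) ^ 2 + sin y ^ 2) with (2 - 2 * cos y).
  2: { assert (e := sin2_cos2 y). unfold Rsqr in e. simpl. nra. }
  set (D := 2 - 2 * cos y). assert (HD : 0 < D) by (unfold D; lra).
  assert (E : sqrt D = exp (ln D / 2)).
  { rewrite <- (exp_ln (sqrt D)) by (apply sqrt_lt_R0; lra). f_equal.
    assert (ln (sqrt D) + ln (sqrt D) = ln D).
    { rewrite <- ln_mult by (apply sqrt_lt_R0; lra). rewrite sqrt_sqrt by lra. reflexivity. }
    lra. }
  rewrite E. rewrite <- exp_Ropp. f_equal. field.
Qed.

Lemma num_bound h : 0 < h -> h < 16/5 -> 3 * ln h < 4 * ln 2 + 9/10.
Proof.
  intros H1 H2.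
  assert (a1 : ln h < ln (16/5)) by (apply ln_increasing; lra).
  assert (a2 : ln (29/20) <= 9/20) by (assert (t := ln_le_sub1 (29/20) ltac:(lra)); lra).
  assert (a3 : 3 * ln (16/5) = ln (16/5 * (16/5) * (16/5))) by (rewrite !ln_mult by lra; ring).
  assert (a4 : 4 * ln 2 + 2 * ln (29/20) = ln (2*2*2*2*(29/20)*(29/20))) by (rewrite !ln_mult by lra; ring).
  assert (a5 : ln (16/5 * (16/5) * (16/5)) < ln (2*2*2*2*(29/20)*(29/20))) by (apply ln_increasing; lra).
  lra.
Qed.

Theorem proposition3p2 (N : nat) (theta : R) :
  (2 <= N)%nat -> 0 < theta -> theta < 2 * PI ->
  exists Cl2 : R,
    infinite_sum (clausen_term theta) Cl2 /\
    prod_1_to N (fun j => / abs_expi_minus1 (INR j * theta / INR N))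
      < 2 * INR N / (theta * sin (theta / 2))
        * exp (INR N * Cl2 / theta).
Proof.
  intros HN Ht1 Ht2.
  exists (Cr 1 theta). split.
  { assert (H := Cr_is 1 theta ltac:(lra)).
    intros eps He. destruct (H eps He) as [M HM]. exists M. intros n Hn.
    specialize (HM n Hn).
    replace (sum_f_R0 (clausen_term theta) n) with (sum_f_R0 (cterm 1 theta) n). exact HM.
    apply sum_eq. intros i _. unfold cterm, clausen_term. rewrite pow1, Rmult_1_l. reflexivity. }
  assert (HP := PI_RGT_0). assert (HPl := PI_lt).
  assert (HNr : 2 <= INR N) by (apply (le_INR 2); exact HN).
  set (h := theta / INR N).
  assert (Hh : 0 < h) by (unfold h; apply Rdiv_lt_0_compat; lra).
  assert (Hh2 : h <= theta / 2).
  { unfold h. unfold Rdiv. apply Rmult_le_compat_l. lra. apply Rinv_le_contravar; lra. }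
  assert (HhN : h * INR N = theta) by (unfold h; field; lra).
  set (g := fun j : nat => fr 1 (INR j * h)).
  rewrite (prod_exp N _ g).
  2: { intros j Hj. unfold g. replace (INR j * theta / INR N) with (INR j * h) by (unfold h; field; lra).
       apply inv_abs_exp.
       assert (1 <= INR j) by (apply (le_INR 1); lia).
       assert (INR j <= INR N) by (apply le_INR; lia). nra. }
  destruct N as [|N']. lia.
  rewrite sum_1_to_S.
  assert (HN' : INR (S N') = INR N' + 1) by apply S_INR.
  assert (HgN : g (S N') = fr 1 theta) by (unfold g; rewrite Rmult_comm, HhN; reflexivity).
  rewrite HgN.
  set (Sp := sum_1_to N' g).
  set (Cl := Cr 1 theta).
  assert (Htel := tele h N' Hh ltac:(nra)).
  fold g in Htel. fold Sp in Htel.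
  replace (INR N' * h + h/2) with (theta - h/2) in Htel by nra.
  assert (Hlast := last_piece theta (h/2) ltac:(lra) ltac:(lra) Ht2).
  assert (Hfirst := first_piece (h/2) (h / 20) ltac:(lra) ltac:(lra)).
  assert (Hlnh2 : ln (h/2) = ln h - ln 2).
  { unfold Rdiv. rewrite ln_mult, ln_Rinv by lra. ring. }
  rewrite Hlnh2 in Hfirst.
  assert (Hcl : h * (Sp + 1/2 - ln h / 2 - 1/20) <= Cl) by (unfold Cl; nra).
  set (X := Cl / h).
  assert (HX : Sp + 1/2 - ln h / 2 - 1/20 <= X).
  { apply (Rmult_le_reg_l h). lra. unfold X. replace (h * (Cl / h)) with Cl by (field; lra). lra. }
  set (s := sin (theta / 2)).
  assert (Hs : 0 < s) by (unfold s; apply sin_gt_0; lra).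
  assert (Hcos : 2 - 2 * cos theta = 4 * (s * s)).
  { unfold s. replace theta with (2 * (theta / 2)) at 1 by field. rewrite cos_2a_sin. ring. }
  assert (HF : fr 1 theta = - ln 2 - ln s).
  { rewrite F_eq, Hcos. rewrite !ln_mult by nra. rewrite ln4. lra. }
  assert (Hexp : INR (S N') * Cl / theta = X).
  { unfold X. rewrite <- HhN. field. lra. }
  rewrite Hexp.
  assert (Hc : 2 * INR (S N') / (theta * s) = exp (ln 2 - ln h - ln s)).
  { replace (ln 2 - ln h - ln s) with (ln (2 * / h * / s)).
    2: { rewrite !ln_mult, !ln_Rinv; try lra; try apply Rinv_0_lt_compat; try lra.
         apply Rmult_lt_0_compat; [lra| apply Rinv_0_lt_compat; lra]. }
    rewrite exp_ln.
    2: { apply Rmult_lt_0_compat; [apply Rmult_lt_0_compat; [lra| apply Rinv_0_lt_compat; lra]|apply Rinv_0_lt_compat; lra]. }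
    rewrite <- HhN. field. split; lra. }
  rewrite Hc. rewrite <- exp_plus. apply exp_increasing.
  fold Sp. rewrite HF.
  assert (Hnum := num_bound h Hh ltac:(lra)).
  lra.
Qed.
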